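(* Let $G\le\mathcal{S}_n$ be a $2$-homogeneous group such that the setwise stabiliser in $G$ of a $2$-subset of $\Omega$ is transitive on the remaining $n-2$ points. Then the stabiliser in $G$ of a point $p$ is transitive on the $2$-subsets of $\Omega$ not containing $p$.
   Context: $\Omega=\{1,\ldots,n\}$; $G$ is $2$-homogeneous if it is transitive on the $2$-element subsets of $\Omega$. *)

(* Defs.v *)
From mathcomp Require Import all_boot all_fingroup.
Set Implicit Arguments. Unset Strict Implicit. Unset Printing Implicit Defensive.

(* Omega = 'I_n (points 0..n-1); permutation groups are subgroups of 'S_n,
   acting naturally via the action 'P, and on subsets via 'P^*. *)

Definition two_subsets (n : nat) : {set {set 'I_n}} :=
  [set A : {set 'I_n} | #|A| == 2].

Definition two_homogeneous (n : nat) (G : {group 'S_n}) : Prop :=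
  [transitive G, on two_subsets n | 'P^*].

Definition two_subsets_avoiding (n : nat) (p : 'I_n) : {set {set 'I_n}} :=
  [set B in two_subsets n | p \notin B].

(* Main.v *)
Require Import Defs.
From mathcomp Require Import all_boot all_fingroup.

Theorem corollary3p3 (n : nat) (G : {group 'S_n}) :
  two_homogeneous G ->
  (forall A : {set 'I_n}, A \in two_subsets n ->
     [transitive 'N_G(A | 'P), on ~: A | 'P]) ->
  forall p : 'I_n,
    [transitive 'C_G[p | 'P], on two_subsets_avoiding p | 'P^*].
Proof.
move=> hom hN p.
have orbB : forall B C, B \in two_subsets_avoiding p ->
    C \in two_subsets_avoiding p -> C \in orbit 'P^* 'C_G[p | 'P] B.
  move=> B C; rewrite !inE => /andP[B2 pB] /andP[C2 pC].
  have B2' : B \in two_subsets n by rewrite inE.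
  have C2' : C \in two_subsets n by rewrite inE.
  have [g Gg BC] := atransP2 hom B2' C2'.
  have pgC : 'P%act p g \in ~: C.
    rewrite inE BC; apply: contra pB => /imsetP [x xB].
    by rewrite /= /aperm => /perm_inj ->.
  have pC' : p \in ~: C by rewrite inE.
  have [h Nh pgh] := atransP2 (hN C C2') pgC pC'.
  apply/orbitP; exists (g * h)%g.
    rewrite inE groupM //; last by case/setIP: Nh.
    by apply/astab1P; rewrite actM -pgh.
  rewrite actM -BC; apply: astabs_setact.
  by case/setIP: Nh.
have [B0 SB0] : exists B0, B0 \in two_subsets_avoiding p.
  have [A A2 _] := imsetP hom.
  have [c cA] : exists c, c \in ~: A.
    have [c cA _] := imsetP (hN A A2).
    by exists c.
  have A2b := A2; rewrite inE in A2b.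
  have [x [y [xy Adef]]] := cards2P _ A2b.
  case: (boolP (p \in A)) => pA; last by exists A; rewrite inE A2 pA.
  have cx : c != x by apply: contraTneq cA => ->; rewrite inE Adef !inE eqxx.
  have cy : c != y by apply: contraTneq cA => ->; rewrite inE Adef !inE eqxx orbT.
  move: pA; rewrite Adef !inE => /orP[/eqP px|/eqP py].
    exists [set y; c]; rewrite !inE cards2 (eq_sym y c) cy /=.
    by rewrite px (negbTE xy) (eq_sym x c) (negbTE cx).
  exists [set x; c]; rewrite !inE cards2 (eq_sym x c) cx /=.
  by rewrite py (eq_sym y x) (negbTE xy) (eq_sym y c) (negbTE cy).
apply/imsetP; exists B0 => //; apply/setP => C; apply/idP/idP.
  by apply: orbB.
case/orbitP => a /setIP[Ga /astab1P pa] <-.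
move: SB0; rewrite !inE card_setact => /andP[-> pB] /=.
rewrite -pa; apply: contra pB => /imsetP [x xB].
by rewrite /= /aperm => /perm_inj ->.
Qed.
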